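(* Let $F$ be a finite field, let $f,g,q\in F[\lambda]$ with $f,g$ relatively prime and $q=\sum_{i=0}^m q_i\lambda^i$ monic and irreducible, and let $Q=\mathfrak p_q(g,f):=\sum_{i=0}^m q_i f^i g^{m-i}$, assumed nonzero. Let $L$ be the splitting field of $q$ over $F$ and $\alpha\in L$ a root of $q$. Then $Q$ is irreducible over $F$ if and only if $f-\alpha g$ is irreducible over $L$.
   Context: $\mathfrak p_q(g,f)=g^{\deg q}q(f/g)$. *)

(* Defs.v *)
From HB Require Import structures.
From mathcomp Require Import all_boot all_order all_algebra all_field.
Set Implicit Arguments. Unset Strict Implicit. Unset Printing Implicit Defensive.
Import GRing.Theory.
Local Open Scope ring_scope.

(* p_q(g,f) = g^{deg q} q(f/g) = \sum_{i=0}^m q_i f^i g^{m-i}, m = deg q *)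
Definition pq (R : comNzRingType) (q g f : {poly R}) : {poly R} :=
  \sum_(i < size q) q`_i *: (f ^+ i * g ^+ ((size q).-1 - i)).

(* Main.v *)
Require Import Defs.
From HB Require Import structures.
From mathcomp Require Import all_boot all_order all_algebra all_field.
From mathcomp Require Import all_fingroup ring zify.
Import GRing.Theory.
Local Open Scope ring_scope.

Definition Hs {R : comNzRingType} (g f : {poly R}) (n : nat) (q : {poly R}) :=
  \sum_(i < n.+1) q`_i *: (f ^+ i * g ^+ (n - i)).

Lemma pq_Hs (R : comNzRingType) (q g f : {poly R}) :
  pq q g f = Hs g f (size q).-1 q.
Proof.
rewrite /pq /Hs; case sq: (size q) => [|n] /=.
  by rewrite big_ord0 big_ord1 nth_default ?sq // scale0r.
by [].
Qed.

Lemma Hs_B (R : comNzRingType) (g f : {poly R}) n p1 p2 :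
  Hs g f n (p1 - p2) = Hs g f n p1 - Hs g f n p2.
Proof.
by rewrite /Hs -sumrB; apply: eq_bigr => i _; rewrite coefB scalerBl.
Qed.

Lemma Hs_X (R : comNzRingType) (g f : {poly R}) n p :
  Hs g f n.+1 ('X * p) = f * Hs g f n p.
Proof.
rewrite /Hs big_ord_recl coefXM eqxx scale0r add0r mulr_sumr.
apply: eq_bigr => i _; rewrite coefXM /= /bump /= add1n.
rewrite subSS exprS -mulrA -scalerAr; done.
Qed.

Lemma Hs_Z (R : comNzRingType) (g f : {poly R}) n (p : {poly R}) (c : R) :
  (size p <= n.+1)%N -> Hs g f n.+1 (c *: p) = (c *: g) * Hs g f n p.
Proof.
move=> sp; rewrite /Hs big_ord_recr /= coefZ.
rewrite (nth_default 0 sp) mulr0 scale0r addr0.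
rewrite mulr_sumr; apply: eq_bigr => i _.
rewrite coefZ subSn ?(leq_ord i) // exprS.
rewrite -!mul_polyC polyCM; ring.
Qed.



Lemma Hs_prod (R : comNzRingType) (g f : {poly R}) (s : seq R) :
  Hs g f (size s) (\prod_(b <- s) ('X - b%:P)) = \prod_(b <- s) (f - b *: g).
Proof.
elim: s => [|x s IH].
  by rewrite !big_nil /Hs big_ord1 coef1 /= scale1r mulr1.
rewrite !big_cons /= mulrBl mul_polyC Hs_B Hs_X Hs_Z ?size_prod_XsubC // IH.
by rewrite mulrBl.
Qed.

Lemma pq_map (F K : fieldType) (phi : {rmorphism F -> K})
   (q g f : {poly F}) :
  map_poly phi (pq q g f) = pq (map_poly phi q) (map_poly phi g) (map_poly phi f).
Proof.
rewrite /pq rmorph_sum size_map_poly; apply: eq_bigr => i _.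
rewrite coef_map -!mul_polyC rmorphM /= map_polyC rmorphM !rmorphXn /=.
done.
Qed.

Lemma coprime_lin (R : fieldType) (f g : {poly R}) (a b : R) :
  coprimep f g -> a != b -> coprimep (f - a *: g) (f - b *: g).
Proof.
move=> /coprimepP cfg ab; apply/coprimepP => d d1 d2.
have dg : d %| g.
  have : d %| (f - a *: g) - (f - b *: g) by rewrite dvdp_sub.
  have -> : (f - a *: g) - (f - b *: g) = (b - a) *: g.
    by rewrite scalerBl; rewrite opprB addrC addrA subrK addrC.
  by rewrite dvdpZr // subr_eq0 eq_sym.
apply: cfg => //.
have -> : f = (f - a *: g) + a%:P * g by rewrite mul_polyC subrK.
by rewrite dvdp_add // dvdp_mull.
Qed.

Lemma coprimep_prod_seq (R : idomainType) (I : eqType) (s : seq I)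
    (F : I -> {poly R}) (p : {poly R}) :
  (forall j, j \in s -> coprimep p (F j)) -> coprimep p (\prod_(j <- s) F j).
Proof.
elim: s => [|x s IH] H; first by rewrite big_nil coprimep1.
rewrite big_cons coprimepMr H ?mem_head //=.
by apply: IH => j js; apply: H; rewrite inE js orbT.
Qed.

Lemma prod_coprime_dvdp (R : idomainType) (I : eqType) (s : seq I)
    (F : I -> {poly R}) (p : {poly R}) :
  uniq s -> (forall i, i \in s -> F i %| p) ->
  (forall i j, i \in s -> j \in s -> i != j -> coprimep (F i) (F j)) ->
  \prod_(i <- s) F i %| p.
Proof.
elim: s => [|x s IH] /= us Hd Hc; first by rewrite big_nil dvd1p.
case/andP: us => xs us.
rewrite big_cons Gauss_dvdp.
  rewrite Hd ?mem_head //= IH // => [i iS|i j iS jS]; first by rewrite Hd // inE iS orbT.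
  by apply: Hc; rewrite inE ?iS ?jS orbT.
apply: coprimep_prod_seq => j jin.
apply: Hc; first exact: mem_head.
  by rewrite inE jin orbT.
by apply/eqP => ex; move: xs; rewrite ex jin.
Qed.

Lemma fixed_polyOver1 (F : finFieldType) (L : splittingFieldType F) (p : {poly L}) :
  (forall s, s \in 'Gal(fullv / 1)%g -> map_poly s p = p) -> p \is a polyOver 1%VS.
Proof.
move=> H; apply/polyOverP => i.
have gal1 : galois (1%AS : {subfield L}) fullv by apply: finField_galois; exact: sub1v.
rewrite -(galois_fixedField gal1); apply/fixedFieldP; first exact: memvf.
by move=> s sG; rewrite -coef_map H.
Qed.

Lemma map_inalg_fixed (F : finFieldType) (L : splittingFieldType F) (p : {poly F}) s :
  s \in 'Gal(fullv / 1)%g -> map_poly s (map_poly (in_alg L) p) = map_poly (in_alg L) p.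
Proof.
move=> sG; apply: (fixedPoly_gal (sub1v _) sG).
by apply/polyOver1P; exists p.
Qed.

Lemma Nfixed (F : finFieldType) (L : splittingFieldType F) (d : {poly L}) t :
  t \in 'Gal(fullv / 1)%g ->
  map_poly t (\prod_(s in 'Gal(fullv / 1)%g) map_poly s d) =
  \prod_(s in 'Gal(fullv / 1)%g) map_poly s d.
Proof.
move=> tG; rewrite rmorph_prod /=.
rewrite [RHS](reindex_inj (mulIg t)) /=.
apply: eq_big => s; first by rewrite groupMr.
move=> _; rewrite -map_poly_comp; apply: eq_map_poly => a /=.
by rewrite galM ?memvf.
Qed.

Lemma struct_gal (F : finFieldType) (L : splittingFieldType F) (q : {poly F}) (alpha : L) :
  q \is monic -> irreducible_poly q ->
  splittingFieldFor 1%VS (map_poly (in_alg L) q) fullv ->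
  root (map_poly (in_alg L) q) alpha ->
  [/\ map_poly (in_alg L) q = \prod_(s in 'Gal(fullv / 1)%g) ('X - (s alpha)%:P),
      (forall s t, s \in 'Gal(fullv / 1)%g -> t \in 'Gal(fullv / 1)%g ->
            s alpha = t alpha -> s = t) &
      #|'Gal((fullv : {vspace L}) / 1)%g| = (size q).-1].
Proof.
move=> qmon qirr [rs Hrs Hfull] qa.
set qL := map_poly (in_alg L) q.
have qL1 : qL \is a polyOver 1%VS by apply/polyOver1P; exists q.
have mq : minPoly 1 alpha = qL.
  have md : minPoly 1 alpha %| qL by apply: minPoly_dvdp.
  have /polyOver1P [P DP] := minPolyOver 1 alpha.
  have Pmon : P \is monic by rewrite -(map_monic (in_alg L)) -DP monic_minPoly.
  have sP : size P != 1%N.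
    rewrite -(size_map_poly (in_alg L)) -DP; apply/negP.
    move=> /size_poly1P [c c0 Hc]; have := root_minPoly 1 alpha.
    by rewrite Hc rootC (negbTE c0).
  have Pq : P %| q by rewrite -(dvdp_map (in_alg L)) -DP.
  have := apply_irredp qirr sP Pq; rewrite eqp_monic // => /eqP Pq'.
  by rewrite DP Pq'.
have gal1 : galois (1%AS : {subfield L}) fullv by apply: finField_galois; exact: sub1v.
have fullA : (fullv : {vspace L}) = <<1; alpha>>%VS.
  apply/eqP; rewrite eqEsubv subvf andbT -Hfull.
  have gA : galois (1%AS : {subfield L}) <<1; alpha>>%AS.
    by apply: finField_galois; exact: subv_adjoin.
  case/and3P: gA => _ _ nA.
  have [r' /allP r'A Dr'] := normalFieldP nA alpha (memv_adjoin 1 alpha).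
  apply/Fadjoin_seqP; split; first exact: subv_adjoin.
  move=> b brs; apply: r'A.
  rewrite -root_prod_XsubC -Dr' mq (eqp_root Hrs) root_prod_XsubC //.
have inj : forall s t, s \in 'Gal(fullv / 1)%g -> t \in 'Gal(fullv / 1)%g ->
            s alpha = t alpha -> s = t.
  move=> s t sG tG st; apply/eqP/gal_eqP => a _.
  have : a \in <<1; alpha>>%VS by rewrite -fullA memvf.
  case/Fadjoin_polyP => p p1 ->.
  rewrite -!horner_map /= !(fixedPoly_gal (sub1v _) _ p1) //.
  by rewrite st.
have [r [rG ura Dm]] := (galois_factors (sub1v _) gal1) alpha (memvf alpha).
have ur : uniq r by move: ura; apply: map_uniq.
have cardG : #|'Gal((fullv : {vspace L}) / 1)%g| = size r.
  rewrite -(galois_dim gal1) dimv1 divn1.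
  change (\dim (fullv : {vspace L}) = size r); rewrite fullA dim_Fadjoin dimv1 muln1.
  apply/eqP; rewrite -eqSS -size_minPoly Dm size_prod_XsubC size_map //.
have rGs : {subset r <= enum 'Gal((fullv : {vspace L}) / 1)%g}.
  by move=> x xr; rewrite mem_enum; exact: (subsetP rG).
have szG : (size (enum 'Gal((fullv : {vspace L}) / 1)%g) <= size r)%N by rewrite -cardE cardG.
have [_ req] := uniq_min_size ur rGs szG.
have pr : perm_eq r (enum 'Gal((fullv : {vspace L}) / 1)%g).
  by apply: uniq_perm => //; exact: enum_uniq.
split => //.
  by rewrite -mq Dm big_map (perm_big _ pr) big_enum.
by rewrite cardG -(size_map_poly (in_alg L) q) -/qL -mq Dm size_prod_XsubC size_map.
Qed.

Lemma sizeN (F : finFieldType) (L : splittingFieldType F) (d : {poly L}) :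
  d != 0 ->
  size (\prod_(s in 'Gal((fullv : {vspace L}) / 1)%g) map_poly s d) =
  (#|'Gal((fullv : {vspace L}) / 1)%g| * (size d).-1).+1.
Proof.
move=> d0; rewrite size_prod; last by move=> s _; rewrite map_poly_eq0.
under eq_bigr => s _ do rewrite size_map_poly.
rewrite sum_nat_const.
have : (0 < size d)%N by rewrite size_poly_gt0.
case: (size d) => [//|n] _ /=.
rewrite mulnS -addnS addnC addnK; done.
Qed.

Lemma main_gen (F : finFieldType) (f g q : {poly F})
  (L : splittingFieldType F) (alpha : L) :
  coprimep f g ->
  q \is monic -> irreducible_poly q ->
  pq q g f != 0 ->
  splittingFieldFor 1%VS (map_poly (in_alg L) q) fullv ->
  root (map_poly (in_alg L) q) alpha ->
  (irreducible_poly (pq q g f) <->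
   irreducible_poly (map_poly (in_alg L) f - alpha *: map_poly (in_alg L) g)).
Proof.
move=> cfg qmon qirr Q0 Hspl qa.
have [qprod inj cardG] := @struct_gal F L q alpha qmon qirr Hspl qa.
set G := 'Gal((fullv : {vspace L}) / 1)%g in qprod inj cardG *.
set fL := map_poly (in_alg L) f; set gL := map_poly (in_alg L) g.
set h := fL - alpha *: gL.
set Q := pq q g f.
have sigh : forall s, s \in G -> map_poly s h = fL - (s alpha) *: gL.
  move=> s sG; rewrite /h -!mul_polyC rmorphB rmorphM /= map_polyC /= !map_inalg_fixed //.
have QLN : map_poly (in_alg L) Q = \prod_(s in G) map_poly s h.
  have E : \prod_(s in G) ('X - (s alpha)%:P) =
           \prod_(b <- map (fun s : gal_of (fullv : {vspace L}) => s alpha) (enum G)) ('X - b%:P).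
    by rewrite big_map big_enum.
  rewrite /Q pq_map pq_Hs qprod E size_prod_XsubC /= Hs_prod big_map big_enum.
  by apply: eq_bigr => s sG; rewrite sigh.
have G0 : (0 < #|G|)%N by apply: cardG_gt0.
have h0 : h != 0.
  apply/eqP => h0; move: Q0; rewrite -(map_poly_eq0 (in_alg L)) QLN.
  rewrite (bigD1 1%g) ?group1 //= h0 rmorph0 mul0r eqxx //.
have sizeQ : size Q = (#|G| * (size h).-1).+1.
  by rewrite -(size_map_poly (in_alg L)) QLN sizeN.
have cfgL : coprimep fL gL by rewrite coprimep_map.
split.
- case=> sQ irQ; split.
    move: sQ; rewrite sizeQ; case: (size h) => [|[|n]] //=; by rewrite muln0.
  move=> d sd dh.
  have d0 : d != 0 by apply: contraTneq dh => ->; rewrite dvd0p.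
  case: (eqVneq (size d) (size h)) => [e|ne]; first by rewrite -dvdp_size_eqp // e.
  exfalso.
  have ltd : (size d < size h)%N by rewrite ltn_neqAle ne dvdp_leq.
  have sd2 : (1 < size d)%N.
    by move: sd; rewrite -size_poly_gt0 in d0; case: (size d) d0 => [|[|n]].
  set D := \prod_(s in G) map_poly s d.
  have D1 : D \is a polyOver 1%VS.
    by apply: fixed_polyOver1 => s sG; apply: Nfixed.
  have /polyOver1P [P DP] := D1.
  have PQ : P %| Q.
    rewrite -(dvdp_map (in_alg L)) -DP QLN.
    apply: (big_ind2 (fun a b : {poly L} => a %| b)); first by rewrite dvdpp.
      by move=> x1 x2 y1 y2 H1 H2; apply: dvdp_mul.
    by move=> s _; rewrite dvdp_map.
  have sP : size P = (#|G| * (size d).-1).+1.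
    by rewrite -(size_map_poly (in_alg L)) -DP sizeN.
  have sP1 : size P != 1%N.
    rewrite sP eqSS muln_eq0 negb_or -lt0n G0 /=.
    by case: (size d) sd2 => [|[|n]].
  have := eqp_size (irQ P sP1 PQ); rewrite sP sizeQ => /eqP.
  rewrite eqSS eqn_pmul2l // => /eqP.
  move: ltd sd2; case: (size d) => [|n]; case: (size h) => [|m] //= H1 _ H2.
  by move: H1; rewrite H2 ltnn.
- case=> sh irh; split.
    rewrite sizeQ ltnS muln_gt0 G0 /=.
    by case: (size h) sh => [|[|n]].
  move=> P sP PQ.
  have P0 : P != 0 by apply: contraNneq Q0 => P0; move: PQ; rewrite P0 dvd0p.
  set PL := map_poly (in_alg L) P.
  have PLfix : forall s, s \in G -> map_poly s PL = PL.
    by move=> s sG; rewrite /PL map_inalg_fixed.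
  have PLdN : PL %| \prod_(s in G) map_poly s h by rewrite -QLN dvdp_map.
  have sPL : size PL != 1%N by rewrite size_map_poly.
  have hPL : h %| PL.
    case: (boolP (coprimep h PL)) => cop.
      exfalso.
      have cN : coprimep PL (\prod_(s in G) map_poly s h).
        rewrite -big_enum; apply: coprimep_prod_seq => s; rewrite mem_enum => sG.
        by rewrite -{1}(PLfix s sG) coprimep_map coprimep_sym.
      by move: (coprimep_dvdl PLdN cN); rewrite coprimepp (negbTE sPL).
    have gs : size (gcdp h PL) != 1%N by exact: cop.
    have := irh _ gs (dvdp_gcdl h PL) => E.
    by rewrite -(eqp_dvdl _ E) dvdp_gcdr.
  have allh : forall s, s \in G -> map_poly s h %| PL.
    by move=> s sG; rewrite -(PLfix s sG) dvdp_map.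
  have prodPL : \prod_(s in G) map_poly s h %| PL.
    rewrite -big_enum; apply: prod_coprime_dvdp.
    - exact: enum_uniq.
    - by move=> s; rewrite mem_enum; apply: allh.
    move=> s t; rewrite !mem_enum => sG tG st.
    rewrite !sigh //; apply: coprime_lin => //.
    by apply/eqP => e; move: st; rewrite (inj s t sG tG e) eqxx.
  have QP : Q %| P by rewrite -(dvdp_map (in_alg L)) QLN.
  by rewrite /eqp PQ QP.
Qed.

Theorem mainTheorem5 (F : finFieldType) (f g q : {poly F})
  (L : fieldExtType F) (alpha : L) :
  coprimep f g ->
  q \is monic -> irreducible_poly q ->
  pq q g f != 0 ->
  splittingFieldFor 1%VS (map_poly (in_alg L) q) fullv ->
  root (map_poly (in_alg L) q) alpha ->
  (irreducible_poly (pq q g f) <->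
   irreducible_poly (map_poly (in_alg L) f - alpha *: map_poly (in_alg L) g)).
Proof.
pose L' := FinSplittingFieldType F L.
move=> H1 H2 H3 H4 H5 H6.
have := @main_gen F f g q L' alpha H1 H2 H3 H4 H5 H6.
by [].
Qed.
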